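(* Let $0\le k\le n$. There are exactly $k(n-k)+1$ isomorphism classes of matroids of rank $k$ on $n$ elements of the form $\mathsf{U}_{0,m}\oplus\mathsf{T}_{k-\ell,n-\ell-m}\oplus\mathsf{U}_{\ell,\ell}$, and the Tutte polynomials of representatives of these classes are linearly independent in $\mathbb{Z}[x,y]$.
   Context: $\mathsf{U}_{r,m}$ is the uniform matroid of rank $r$ on $m$ elements. For $0\le k\le n$, $\mathsf{T}_{k,n}$ is the minimal matroid: the matroid on $[n]$ whose bases are the $k$-subsets $B$ with $|B\cap\{1,\dots,k\}|\ge k-1$ (equivalently, the cycle matroid of a cycle of length $k+1$ with one edge replaced by $n-k$ parallel edges). *)

(* Defs.v *)
(* Z[x,y] is {mpoly int[2]} (multinomials), x = 'X_0, y = 'X_1. *)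
From HB Require Import structures.
From mathcomp Require Import all_boot all_order all_algebra.
From mathcomp Require Import mpoly.
Set Implicit Arguments. Unset Strict Implicit. Unset Printing Implicit Defensive.
Import GRing.Theory.

Definition bases_fam (E : finType) := {set {set E}}.

Definition is_matroid (E : finType) (M : bases_fam E) : Prop :=
  (exists B, B \in M) /\
  forall B1 B2, B1 \in M -> B2 \in M -> forall x, x \in B1 :\: B2 ->
    exists2 y, y \in B2 :\: B1 & (y |: (B1 :\ x)) \in M.

Definition mrank (E : finType) (M : bases_fam E) (A : {set E}) : nat :=
  \max_(B in M) #|A :&: B|.

Definition mrk (E : finType) (M : bases_fam E) : nat := mrank M [set: E].

Definition miso (E1 E2 : finType) (M1 : bases_fam E1) (M2 : bases_fam E2) : Prop :=
  exists f : E1 -> E2, bijective f /\ forall X : {set E1}, (X \in M1) = (f @: X \in M2).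

Definition tutte (E : finType) (M : bases_fam E) : {mpoly int[2]} :=
  \sum_(A : {set E})
    ('X_(0 : 'I_2) - 1) ^+ (mrk M - mrank M A) *
    ('X_(1 : 'I_2) - 1) ^+ (#|A| - mrank M A).

Definition Uni (r m : nat) : bases_fam 'I_m := [set X : {set 'I_m} | #|X| == r].

(* Minimal matroid T_{k,n} on 'I_n (elements 0..k-1 form {1,...,k}):
   bases are the k-subsets B with |B ∩ {1..k}| >= k-1. *)
Definition Tmin (k n : nat) : bases_fam 'I_n :=
  [set X : {set 'I_n} | (#|X| == k) && (k <= #|X :&: [set i : 'I_n | i < k]|.+1)].

Definition dsum (E1 E2 : finType) (M1 : bases_fam E1) (M2 : bases_fam E2)
  : bases_fam (E1 + E2)%type :=
  [set X : {set E1 + E2} | [exists B1 in M1, exists B2 in M2,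
      X == (inl @: B1) :|: (inr @: B2)]].

Definition Fam (k n l m : nat)
  : bases_fam ('I_m + ('I_(n - l - m) + 'I_l))%type :=
  dsum (Uni 0 m) (dsum (Tmin (k - l) (n - l - m)) (Uni l l)).

(* Admissible parameters (l, m): 0 <= l <= k and 0 <= m <= n - k
   (equivalently all three summands make sense: k - l <= n - l - m). *)
Definition valid_par (k n : nat) (p : nat * nat) : bool := (p.1 <= k) && (p.2 <= n - k).

(* Main.v *)
Require Import Defs.
From HB Require Import structures.
From mathcomp Require Import all_boot all_order all_algebra.
From mathcomp Require Import mpoly.
From mathcomp Require Import zify ring.
Import GRing.Theory.
Set Implicit Arguments. Unset Strict Implicit. Unset Printing Implicit Defensive.

Section HS.
Variables E1 E2 : finType.
Definition hs (A : {set E1}) (B : {set E2}) : {set (E1 + E2)} := inl @: A :|: inr @: B.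

Lemma in_hsl A B x : (inl x \in hs A B) = (x \in A).
Proof.
rewrite /hs in_setU; apply/orP/idP => [[/imsetP[y ? [->]] | /imsetP[? ? //]] //|?].
by left; apply: imset_f.
Qed.

Lemma in_hsr A B x : (inr x \in hs A B) = (x \in B).
Proof.
rewrite /hs in_setU; apply/orP/idP => [[/imsetP[? ? //] | /imsetP[y ? [->]]] //|?].
by right; apply: imset_f.
Qed.

Definition pl (X : {set E1 + E2}) := [set x | inl x \in X].
Definition pr (X : {set E1 + E2}) := [set x | inr x \in X].

Lemma hsE X : hs (pl X) (pr X) = X.
Proof. by apply/setP => -[x|x]; rewrite ?in_hsl ?in_hsr inE. Qed.

Lemma plK A B : pl (hs A B) = A.
Proof. by apply/setP => x; rewrite inE in_hsl. Qed.
Lemma prK A B : pr (hs A B) = B.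
Proof. by apply/setP => x; rewrite inE in_hsr. Qed.

Lemma hs_inj A B C D : hs A B = hs C D -> A = C /\ B = D.
Proof. by move=> e; move: (congr1 (@pl) e) (congr1 (@pr) e); rewrite !plK !prK. Qed.

Lemma hsI A B C D : hs A B :&: hs C D = hs (A :&: C) (B :&: D).
Proof. by apply/setP => -[x|x]; rewrite inE ?in_hsl ?in_hsr inE. Qed.

Lemma hsT : hs [set: E1] [set: E2] = [set: E1 + E2].
Proof. by apply/setP => -[x|x]; rewrite in_setT ?in_hsl ?in_hsr in_setT. Qed.

Lemma hs_sub A B C D : (hs A B \subset hs C D) = (A \subset C) && (B \subset D).
Proof.
apply/subsetP/andP => [H|[/subsetP H1 /subsetP H2]].
  by split; apply/subsetP => x Hx; [rewrite -(in_hsl C D) | rewrite -(in_hsr C D)];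
     apply: H; rewrite ?in_hsl ?in_hsr.
by move=> -[x|x]; rewrite ?in_hsl ?in_hsr; [apply: H1 | apply: H2].
Qed.

Lemma card_hs A B : #|hs A B| = #|A| + #|B|.
Proof.
rewrite /hs cardsU !card_imset; try by move=> ? ? [].
suff -> : inl @: A :&: inr @: B = set0 by rewrite cards0 subn0.
apply/setP => -[x|x]; rewrite !inE.
  by apply/andP => -[_ /imsetP[]].
by apply/andP => -[/imsetP[]].
Qed.

Lemma sum_hs (R : nmodType) (F : {set E1 + E2} -> R) :
  (\sum_(X : {set E1 + E2}) F X = \sum_(A : {set E1}) \sum_(B : {set E2}) F (hs A B))%R.
Proof.
rewrite pair_big /= (reindex (fun p : {set E1} * {set E2} => hs p.1 p.2)) //=.
exists (fun X => (pl X, pr X)) => [[A B] _|X _] /=; first by rewrite plK prK.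
exact: hsE.
Qed.
End HS.

Section Rank.
Variable E : finType.
Implicit Types (M : bases_fam E) (A B : {set E}).

Lemma mrank_eq M A r : (forall B, B \in M -> #|A :&: B| <= r) ->
  (exists2 B, B \in M & r <= #|A :&: B|) -> mrank M A = r.
Proof.
move=> H1 [B HB Hr]; apply/eqP; rewrite eqn_leq; apply/andP; split.
  by apply/bigmax_leqP.
exact: leq_trans Hr (leq_bigmax_cond _ HB).
Qed.

Lemma mrank_le M A B : B \in M -> #|A :&: B| <= mrank M A.
Proof. by move=> HB; apply: (leq_bigmax_cond _ HB). Qed.

Lemma mrank_witness M A : (exists B, B \in M) -> exists2 B, B \in M & mrank M A = #|A :&: B|.
Proof.
move=> /card_gt0P H.
rewrite /mrank; have [B HB ->] := eq_bigmax_cond (fun B => #|A :&: B|) H.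
by exists B.
Qed.

Lemma mrank_le_card M A : mrank M A <= #|A|.
Proof. by apply/bigmax_leqP => B _; apply: subset_leq_card; apply: subsetIl. Qed.

Lemma mrank_le_mrk M A : mrank M A <= mrk M.
Proof.
apply/bigmax_leqP => B HB; apply: leq_trans (mrank_le _ HB).
by apply: subset_leq_card; apply: setSI; apply: subsetT.
Qed.

Lemma mrank_set1 B A : mrank [set B] A = #|A :&: B|.
Proof. by rewrite /mrank big_set1. Qed.

Lemma matroid_set1 B : is_matroid [set B].
Proof.
split; first by exists B; rewrite inE.
by move=> B1 B2; rewrite !inE => /eqP -> /eqP -> x; rewrite setDv inE.
Qed.
End Rank.

Section Dsum.
Variables E1 E2 : finType.
Variables (M1 : bases_fam E1) (M2 : bases_fam E2).

Lemma in_dsum X : X \in dsum M1 M2 -> exists B1, exists B2,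
   [/\ B1 \in M1, B2 \in M2 & X = hs B1 B2].
Proof.
rewrite inE => /existsP[B1 /andP[H1 /existsP[B2 /andP[H2 /eqP ->]]]].
by exists B1, B2.
Qed.

Lemma hs_in_dsum B1 B2 : (hs B1 B2 \in dsum M1 M2) = (B1 \in M1) && (B2 \in M2).
Proof.
apply/idP/andP => [/in_dsum[C1 [C2 [H1 H2 /hs_inj[-> ->]]]]//|[H1 H2]].
rewrite inE; apply/existsP; exists B1; rewrite H1 /=; apply/existsP; exists B2.
by rewrite H2 /=.
Qed.

Hypothesis (ne1 : exists B, B \in M1) (ne2 : exists B, B \in M2).

Lemma mrank_dsum A1 A2 : mrank (dsum M1 M2) (hs A1 A2) = mrank M1 A1 + mrank M2 A2.
Proof.
apply: mrank_eq.
  move=> X /in_dsum[B1 [B2 [H1 H2 ->]]]; rewrite hsI card_hs.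
  by apply: leq_add; apply: mrank_le.
have [B1 H1 e1] := mrank_witness A1 ne1.
have [B2 H2 e2] := mrank_witness A2 ne2.
by exists (hs B1 B2); rewrite ?hs_in_dsum ?H1 ?H2 // hsI card_hs e1 e2.
Qed.

Lemma mrk_dsum : mrk (dsum M1 M2) = mrk M1 + mrk M2.
Proof. by rewrite /mrk -hsT mrank_dsum. Qed.

Lemma tutte_dsum : tutte (dsum M1 M2) = (tutte M1 * tutte M2)%R.
Proof.
rewrite /tutte sum_hs mulr_suml; apply: eq_bigr => A _.
rewrite mulr_sumr; apply: eq_bigr => B _.
rewrite mrk_dsum mrank_dsum card_hs.
have h1 := mrank_le_mrk M1 A; have h2 := mrank_le_mrk M2 B.
have h3 := mrank_le_card M1 A; have h4 := mrank_le_card M2 B.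
have -> : mrk M1 + mrk M2 - (mrank M1 A + mrank M2 B) = (mrk M1 - mrank M1 A) + (mrk M2 - mrank M2 B) by lia.
have -> : #|A| + #|B| - (mrank M1 A + mrank M2 B) = (#|A| - mrank M1 A) + (#|B| - mrank M2 B) by lia.
by rewrite !exprD mulrACA.
Qed.

Hypothesis (m1 : is_matroid M1) (m2 : is_matroid M2).

Lemma matroid_dsum : is_matroid (dsum M1 M2).
Proof.
split.
  case: ne1 => B1 H1; case: ne2 => B2 H2; exists (hs B1 B2).
  by rewrite hs_in_dsum H1 H2.
move=> X Y /in_dsum[P1 [P2 [H1 H2 ->]]] /in_dsum[Q1 [Q2 [K1 K2 ->]]] [x|x].
  rewrite inE in_hsl in_hsl => /andP[nx xP].
  have xin : x \in P1 :\: Q1 by rewrite inE nx xP.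
  have [y yQ Hy] := m1.2 P1 Q1 H1 K1 x xin.
  exists (inl y); first by rewrite inE !in_hsl -in_setD.
  suff -> : inl y |: (hs P1 P2 :\ inl x) = hs (y |: (P1 :\ x)) P2.
    by rewrite hs_in_dsum Hy H2.
  by apply/setP => -[z|z]; rewrite !(in_setU1, in_setD1, in_hsl, in_hsr).
rewrite inE in_hsr in_hsr => /andP[nx xP].
have xin : x \in P2 :\: Q2 by rewrite inE nx xP.
have [y yQ Hy] := m2.2 P2 Q2 H2 K2 x xin.
exists (inr y); first by rewrite inE !in_hsr -in_setD.
suff -> : inr y |: (hs P1 P2 :\ inr x) = hs P1 (y |: (P2 :\ x)).
  by rewrite hs_in_dsum Hy H1.
by apply/setP => -[z|z]; rewrite !(in_setU1, in_setD1, in_hsl, in_hsr).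
Qed.
End Dsum.

Lemma dsum_set1 (E1 E2 : finType) (B1 : {set E1}) (B2 : {set E2}) :
  dsum [set B1] [set B2] = [set hs B1 B2].
Proof.
apply/setP => X; rewrite in_set1; apply/idP/eqP.
  by move/in_dsum => [C1 [C2 []]]; rewrite !inE => /eqP -> /eqP ->.
by move=> ->; rewrite hs_in_dsum !inE !eqxx.
Qed.

Lemma sum_card (R : nmodType) (T : finType) (g : nat -> R) :
  (\sum_(A : {set T}) g #|A| = \sum_(s < #|T|.+1) g s *+ 'C(#|T|, s))%R.
Proof.
rewrite (partition_big (fun A : {set T} => (inord #|A| : 'I_#|T|.+1)) xpredT) //=.
apply: eq_bigr => s _.
rewrite (eq_bigl (fun A => A \in [set A : {set T} | #|A| == s])); last first.
  move=> A; rewrite inE; have h : #|A| <= #|T| by rewrite max_card.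
  apply/eqP/eqP => [<-|e]; first by rewrite inordK.
  by apply/val_inj; rewrite /= inordK // e.
rewrite (eq_bigr (fun _ => g s)); last by move=> A; rewrite inE => /eqP ->.
by rewrite sumr_const card_draws.
Qed.

Notation xx := ('X_(0%R : 'I_2) : {mpoly int[2]}).
Notation yy := ('X_(1%R : 'I_2) : {mpoly int[2]}).

Lemma Uni0 m : Uni 0 m = [set set0].
Proof. by apply/setP => X; rewrite !inE cards_eq0. Qed.

Lemma Unill l : Uni l l = [set setT].
Proof.
apply/setP => X; rewrite !inE; apply/eqP/eqP => [h|->]; last by rewrite cardsT card_ord.
by apply/eqP; rewrite eqEcard subsetT cardsT /= h card_ord.
Qed.

Lemma tutte_Uni0 m : tutte (Uni 0 m) = (yy ^+ m)%R.
Proof.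
rewrite Uni0 /tutte /mrk.
rewrite (eq_bigr (fun A : {set 'I_m} => (yy - 1) ^+ #|A|)%R); last first.
  by move=> A _; rewrite !mrank_set1 !setI0 cards0 !subn0 expr0 mul1r.
by rewrite sum_card card_ord -exprD1n subrK.
Qed.

Lemma tutte_Unill l : tutte (Uni l l) = (xx ^+ l)%R.
Proof.
rewrite Unill /tutte /mrk.
rewrite (eq_bigr (fun A : {set 'I_l} => (xx - 1) ^+ (l - #|A|))%R); last first.
  by move=> A _; rewrite !mrank_set1 !setIT cardsT card_ord subnn expr0 mulr1.
rewrite (sum_card _ (fun s => (xx - 1) ^+ (l - s))%R) card_ord -[in RHS](subrK 1%R xx) exprDn.
by apply: eq_bigr => i _; rewrite expr1n mulr1.
Qed.

Lemma miso_refl (E : finType) (M : bases_fam E) : miso M M.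
Proof.
exists id; split; first by exists id.
by move=> X; rewrite imset_id.
Qed.

Lemma tutte_iso (E1 E2 : finType) (M1 : bases_fam E1) (M2 : bases_fam E2) :
  miso M1 M2 -> tutte M1 = tutte M2.
Proof.
case=> f [fb Hf]; have [g fg gf] := fb.
have If : injective f := bij_inj fb.
have imK : forall B : {set E1}, g @: (f @: B) = B.
  by move=> B; rewrite -imset_comp (eq_imset _ fg) imset_id.
have imK' : forall B : {set E2}, f @: (g @: B) = B.
  by move=> B; rewrite -imset_comp (eq_imset _ gf) imset_id.
have rk : forall A : {set E1}, mrank M2 (f @: A) = mrank M1 A.
  move=> A; rewrite /mrank (reindex (fun B : {set E1} => f @: B)) /=; last first.
    by exists (fun B : {set E2} => g @: B) => B _.
  apply: eq_big => [B|B _]; first by rewrite Hf.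
  by rewrite -imsetI ?card_imset // => ? ? _ _; apply: If.
have mk : mrk M2 = mrk M1.
  rewrite /mrk -rk; congr mrank; apply/setP => z; rewrite in_setT.
  by symmetry; apply/imsetP; exists (g z); rewrite ?in_setT ?gf.
rewrite /tutte [RHS](reindex (fun A : {set E1} => f @: A)) /=; last first.
  by exists (fun B : {set E2} => g @: B) => B _.
by apply: eq_bigr => A _; rewrite mk rk card_imset.
Qed.

Section Iso1.
Variables (E1 E2 : finType) (B1 : {set E1}) (B2 : {set E2}).
Hypotheses (eE : #|E1| = #|E2|) (eB : #|B1| = #|B2|).

Let s1 := enum B1 ++ enum (~: B1).
Let s2 := enum B2 ++ enum (~: B2).

Let mem1 x : x \in s1.
Proof. by rewrite mem_cat !mem_enum inE; case: (x \in B1). Qed.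
Let mem2 x : x \in s2.
Proof. by rewrite mem_cat !mem_enum inE; case: (x \in B2). Qed.
Let size1 : size s1 = #|E1|.
Proof. by rewrite size_cat -!cardE cardsC. Qed.
Let size2 : size s2 = #|E2|.
Proof. by rewrite size_cat -!cardE cardsC. Qed.
Let uniq1 : uniq s1.
Proof.
rewrite cat_uniq !enum_uniq /= andbT; apply/hasPn => x.
by rewrite !mem_enum inE => /negbTE ->.
Qed.
Let uniq2 : uniq s2.
Proof.
rewrite cat_uniq !enum_uniq /= andbT; apply/hasPn => x.
by rewrite !mem_enum inE => /negbTE ->.
Qed.

Let f (x : E1) : E2 := nth (enum_val (cast_ord eE (enum_rank x))) s2 (index x s1).
Let g (y : E2) : E1 := nth (enum_val (cast_ord (esym eE) (enum_rank y))) s1 (index y s2).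

Let fK : cancel f g.
Proof.
move=> x; rewrite /g /f index_uniq ?nth_index //.
by rewrite size2 -eE -size1 index_mem.
Qed.
Let gK : cancel g f.
Proof.
move=> x; rewrite /g /f index_uniq ?nth_index //.
by rewrite size1 eE -size2 index_mem.
Qed.

Let fB : f @: B1 = B2.
Proof.
apply/eqP; rewrite eqEcard card_imset ?eB ?leqnn ?andbT; last exact: can_inj fK.
apply/subsetP => _ /imsetP[x xB ->].
rewrite /f /s1 index_cat mem_enum xB nth_cat.
have hi : index x (enum B1) < size (enum B2) by rewrite -cardE -eB cardE index_mem mem_enum.
by rewrite hi -(mem_enum (mem B2)) mem_nth.
Qed.

Lemma miso_set1 : miso [set B1] [set B2].
Proof.
exists f; split; first by exists g.
move=> X; rewrite !inE -fB; apply/eqP/eqP => [->//|].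
by move/(imset_inj (can_inj fK)).
Qed.
End Iso1.

Ltac nlia := unfold reverse_coercion in *; repeat match goal with H : _ |- _ => progress (simpl in H) end; simpl; lia.

Definition L a N := [set i : 'I_N | i < a].

Lemma card_L a N : a <= N -> #|L a N| = a.
Proof.
move=> h.
have -> : L a N = widen_ord h @: [set: 'I_a].
  apply/setP => i; rewrite inE; apply/idP/imsetP => [ia|[j _ ->]]; last by rewrite /= ltn_ord.
  by exists (Ordinal ia); rewrite ?inE //; apply/val_inj.
rewrite card_imset ?cardsT ?card_ord //.
by move=> x y /(congr1 val) /= /val_inj.
Qed.

Lemma in_Tmin a N X : (X \in Tmin a N) = (#|X| == a) && (a <= #|X :&: L a N|.+1).
Proof. by rewrite inE. Qed.

Lemma L_in_Tmin a N : a <= N -> L a N \in Tmin a N.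
Proof. by move=> h; rewrite in_Tmin setIid card_L // eqxx leqnSn. Qed.

Lemma mrank_Tmin a N (h : a <= N) (S : {set 'I_N}) :
  mrank (Tmin a N) S = #|S :&: L a N| + ((0 < #|S :\: L a N|) && (#|S :&: L a N| < a)).
Proof.
set s := #|S :&: L a N|; set t := #|S :\: L a N|.
have cS : s + t = #|S| by rewrite cardsID.
have sa : s <= a by rewrite -(card_L h); apply: subset_leq_card; apply: subsetIr.
apply: mrank_eq.
  move=> B; rewrite in_Tmin => /andP[/eqP cB hB].
  change (#|S :&: B| <= s + ((0 < t) && (s < a))).
  have {}cB : #|B| = a := cB. have {}hB : a <= #|B :&: L a N|.+1 := hB.
  have e1 : #|S :&: B :&: L a N| + #|(S :&: B) :\: L a N| = #|S :&: B| := cardsID _ _.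
  have e2 : #|S :&: B :&: L a N| <= s.
    by apply: subset_leq_card; apply: setSI; apply: subsetIl.
  have e3 : #|(S :&: B) :\: L a N| <= t.
    by apply: subset_leq_card; apply: setSD; apply: subsetIl.
  have e4 : #|(S :&: B) :\: L a N| <= #|B :\: L a N|.
    by apply: subset_leq_card; apply: setSD; apply: subsetIr.
  have e5 : #|B :&: L a N| + #|B :\: L a N| = #|B| := cardsID _ _.
  have e6 : #|S :&: B| <= #|B| by apply: subset_leq_card; apply: subsetIr.
  have e7 : #|S :&: B| <= #|S| by apply: subset_leq_card; apply: subsetIl.
  clearbody s t; case: (ltnP 0 t) => t0; case: (ltnP s a) => sa'; rewrite ?andbT ?andbF ?addn0 ?addn1; lia.
case: (ltnP 0 t) => t0; case: (ltnP s a) => sa' /=; last first.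
- by exists (L a N); [exact: L_in_Tmin | rewrite addn0].
- by exists (L a N); [exact: L_in_Tmin | rewrite addn0].
- by exists (L a N); [exact: L_in_Tmin | rewrite addn0].
have [x xS] : exists x, x \in S :\: L a N by apply/card_gt0P.
have [y yL] : exists y, y \in L a N :\: S.
  apply/card_gt0P; rewrite cardsD setIC card_L // -/s; lia.
move: xS yL; rewrite !in_setD => /andP[xL xS] /andP[yS yL].
exists (x |: (L a N :\ y)).
  rewrite in_Tmin cardsU1 in_setD1 (negbTE xL) andbF /=.
  have := cardsD1 y (L a N); rewrite yL card_L // => ca.
  apply/andP; split; first by apply/eqP; nlia.
  have : #|L a N :\ y| <= #|(x |: (L a N :\ y)) :&: L a N|.
    apply: subset_leq_card; apply/subsetP => z; rewrite !inE.
    by case/andP => -> ->; rewrite orbT.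
  nlia.
have : #|x |: (S :&: L a N)| <= #|S :&: (x |: (L a N :\ y))|.
  apply: subset_leq_card; apply/subsetP => z; rewrite in_setU1 in_setI => /orP[/eqP ->|/andP[zS zL]].
    by rewrite in_setI xS in_setU1 eqxx.
  rewrite in_setI zS in_setU1 in_setD1 zL andbT /=; apply/orP; right; apply/negP => /eqP zy.
  by move: yS; rewrite -zy zS.
rewrite cardsU1 in_setI (negbTE xL) andbF -/s; nlia.
Qed.

Lemma mrk_Tmin a N : a <= N -> mrk (Tmin a N) = a.
Proof. by move=> h; rewrite /mrk mrank_Tmin // setTI card_L // ltnn andbF addn0. Qed.

Lemma matroid_Tmin a N : a <= N -> is_matroid (Tmin a N).
Proof.
move=> h; split; first by exists (L a N); exact: L_in_Tmin.
move=> B1 B2; rewrite !in_Tmin => /andP[/eqP c1 h1] /andP[/eqP c2 h2] x.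
rewrite in_setD => /andP[xB2 xB1].
have cx := cardsD1 x B1; rewrite xB1 in cx.
have card_ok : forall y, y \notin B1 -> #|y |: (B1 :\ x)| == a.
  move=> y yB; rewrite cardsU1 in_setD1 (negbTE yB) andbF /=; apply/eqP; nlia.
case: (boolP [exists y, y \in (B2 :\: B1) :&: L a N]) => [/existsP[y]|/existsPn Hn].
  rewrite in_setI in_setD => /andP[/andP[yB1 yB2] yL].
  exists y; first by rewrite in_setD yB1 yB2.
  rewrite in_Tmin card_ok //=.
  have k1 : #|y |: ((B1 :\ x) :&: L a N)| <= #|(y |: (B1 :\ x)) :&: L a N|.
    apply: subset_leq_card; apply/subsetP => z; rewrite in_setU1 in_setI => /orP[/eqP ->|/andP[zB zL]].
      by rewrite in_setI yL in_setU1 eqxx.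
    by rewrite in_setI zL in_setU1 zB orbT.
  have k2 : #|B1 :&: L a N| <= #|x |: ((B1 :\ x) :&: L a N)|.
    apply: subset_leq_card; apply/subsetP => z; rewrite in_setI => /andP[zB zL].
    by rewrite in_setU1 in_setI in_setD1 zB zL !andbT orbN.
  move: k1 k2; rewrite !cardsU1 in_setI in_setD1 (negbTE yB1) andbF /=.
  case: (x \notin _) => /=; nlia.
have [y yB] : exists y, y \in B2 :\: B1.
  apply/card_gt0P; rewrite cardsD.
  have : #|B2 :&: B1| <= #|B1 :\ x|.
    apply: subset_leq_card; apply/subsetP => z; rewrite in_setI in_setD1 => /andP[zB2 ->]; rewrite andbT.
    by apply/negP => /eqP zx; move: xB2; rewrite -zx zB2.
  nlia.
exists y => //; move: yB; rewrite in_setD => /andP[yB1 yB2].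
rewrite in_Tmin card_ok //=.
have : #|B2 :&: L a N| <= #|(y |: (B1 :\ x)) :&: L a N|.
  apply: subset_leq_card; apply/subsetP => z; rewrite in_setI => /andP[zB2 zL].
  rewrite in_setI zL andbT in_setU1 in_setD1.
  have := Hn z; rewrite in_setI in_setD zB2 zL /= andbT  andbT => /negPn zB1.
  rewrite zB1 andbT; apply/orP; right; apply/negP => /eqP zx.
  by move: xB2; rewrite -zx zB2.
nlia.
Qed.

Section Sec5.
Local Open Scope ring_scope.


Definition Qg (R : comRingType) (x y : R) (a p : nat) : R :=
  x ^+ a + y ^+ p - 1 + (\sum_(i < a) x ^+ i) * (\sum_(j < p) y ^+ j).

Section RingId.
Variable R : comRingType.

Lemma geoB (v : R) p : \sum_(j < p) (v + 1) ^+ j = \sum_(t < p) v ^+ t *+ 'C(p, t.+1).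
Proof.
elim: p => [|p IH]; first by rewrite !big_ord0.
rewrite big_ord_recr /= IH exprD1n.
rewrite [RHS](eq_bigr (fun t : 'I_p.+1 => v ^+ t *+ 'C(p, t.+1) + v ^+ t *+ 'C(p, t))); last first.
  by move=> t _; rewrite binS mulrnDr.
rewrite big_split /=; congr (_ + _).
by rewrite [RHS]big_ord_recr /= bin_small // mulr0n addr0.
Qed.

Lemma geoA (u : R) a : \sum_(i < a) (u + 1) ^+ i = \sum_(s < a) u ^+ (a - s.+1) *+ 'C(a, s).
Proof.
rewrite geoB (reindex_inj rev_ord_inj) /=; apply: eq_bigr => s _.
by rewrite subnSK ?ltn_ord // bin_sub // ltnW.
Qed.

Lemma ring_id (u v : R) a p :
  \sum_(s < a.+1) (\sum_(t < p.+1) u ^+ (a - (s + ((0 < t) && (s < a)))%N) *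
        v ^+ (s + t - (s + ((0 < t) && (s < a))))%N *+ 'C(p, t)) *+ 'C(a, s)
  = Qg (u + 1) (v + 1) a p.
Proof.
rewrite big_ord_recr /=.
have eL : \sum_(t < p.+1) u ^+ (a - (a + ((0 < t) && (a < a)))%N) *
        v ^+ (a + t - (a + ((0 < t) && (a < a))))%N *+ 'C(p, t) = (v + 1) ^+ p.
  rewrite exprD1n; apply: eq_bigr => t _.
  by rewrite ltnn andbF addn0 subnn expr0 mul1r addKn.
rewrite eL binn mulr1n.
have eF : forall s : 'I_a,
   \sum_(t < p.+1) u ^+ (a - (s + ((0 < t) && (s < a)))%N) *
        v ^+ (s + t - (s + ((0 < t) && (s < a))))%N *+ 'C(p, t)
   = u ^+ (a - s) + u ^+ (a - s.+1) * \sum_(t < p) v ^+ t *+ 'C(p, t.+1).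
  move=> s; rewrite big_ord_recl /= addn0 subnn expr0 mulr1 bin0 mulr1n.
  congr (_ + _); rewrite mulr_sumr; apply: eq_bigr => t _.
  rewrite /bump /= ltn_ord addn1 addnS subSS addKn.
  by rewrite mulrnAr.
rewrite (eq_bigr (fun s : 'I_a => (u ^+ (a - s) + u ^+ (a - s.+1) * \sum_(t < p) v ^+ t *+ 'C(p, t.+1)) *+ 'C(a, s))); last first.
  by move=> s _; rewrite eF.
rewrite /Qg geoA geoB.
rewrite (eq_bigr (fun s : 'I_a => u ^+ (a - s) *+ 'C(a, s) + (u ^+ (a - s.+1) *+ 'C(a, s)) * \sum_(t < p) v ^+ t *+ 'C(p, t.+1))); last first.
  by move=> s _; rewrite mulrnDl mulrnAl.
rewrite big_split /= -mulr_suml.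
have eA : (u + 1) ^+ a = \sum_(i < a) u ^+ (a - i) *+ 'C(a, i) + 1.
  rewrite exprDn big_ord_recr /= subnn expr0 expr1n mul1r binn mulr1n; congr (_ + _).
  by apply: eq_bigr => i _; rewrite expr1n mulr1.
rewrite eA.
set F := \sum_(i < a) _.
set GA := \sum_(s < a) _.
set GB := \sum_(t < p) _.
ring.
Qed.
End RingId.

End Sec5.

Lemma L_unsplit a p : L a (a + p) = unsplit @: hs [set: 'I_a] set0.
Proof.
apply/setP => i; rewrite inE -{1}(splitK i) ltn_unsplit.
by case: (split i) (splitK i) => [j|j] <-; rewrite mem_imset ?in_hsl ?in_hsr ?in_setT ?in_set0 //;
  apply: (can_inj unsplitK).
Qed.

Lemma tutte_Tmin a p : tutte (Tmin a (a + p)) = Qg xx yy a p.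
Proof.
have uI : injective (@unsplit a p) := can_inj unsplitK.
rewrite /tutte mrk_Tmin ?leq_addr //.
rewrite (reindex (fun X : {set 'I_a + 'I_p} => unsplit @: X)) /=; last first.
  exists (fun S : {set 'I_(a + p)} => (@split a p) @: S) => S _; rewrite -imset_comp ?(eq_imset _ unsplitK) ?(eq_imset _ splitK) imset_id //.
rewrite sum_hs.
pose G (s t : nat) := (('X_(0%R : 'I_2) - 1) ^+ (a - (s + ((0 < t) && (s < a)))%N) *
        ('X_(1%R : 'I_2) - 1) ^+ (s + t - (s + ((0 < t) && (s < a))))%N : {mpoly int[2]})%R.
rewrite (eq_bigr (fun A : {set 'I_a} => \sum_(B : {set 'I_p}) G #|A| #|B|)%R); last first.
  move=> A _; apply: eq_bigr => B _.
  have eSL : unsplit @: hs A B :&: L a (a + p) = unsplit @: hs A set0.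
    by rewrite L_unsplit -imsetI ?hsI ?setIT ?setI0 // => ? ? _ _; apply: uI.
  have c1 : #|unsplit @: hs A B :&: L a (a + p)| = #|A|.
    by rewrite eSL card_imset // card_hs cards0 addn0.
  have c0 : #|unsplit @: hs A B| = #|A| + #|B| by rewrite card_imset // card_hs.
  have c2 : #|unsplit @: hs A B :\: L a (a + p)| = #|B|.
    by rewrite cardsD c1 c0 addKn.
  by rewrite mrank_Tmin ?leq_addr // c1 c2 c0 /G.
under eq_bigr => A _ do rewrite (sum_card _ (fun t => G #|A| t)).
rewrite (sum_card _ (fun s => \sum_(t < #|'I_p|.+1) G s t *+ 'C(#|'I_p|, t))%R).
rewrite !card_ord /G.
by rewrite ring_id !subrK.
Qed.

Lemma ne_Uni0 m : exists B, B \in Uni 0 m.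
Proof. by exists set0; rewrite Uni0 inE. Qed.
Lemma ne_Unill l : exists B, B \in Uni l l.
Proof. by exists setT; rewrite Unill inE. Qed.
Lemma ne_Tmin a N : a <= N -> exists B, B \in Tmin a N.
Proof. by move=> h; exists (L a N); apply: L_in_Tmin. Qed.
Lemma ne_dsum (E1 E2 : finType) (M1 : bases_fam E1) (M2 : bases_fam E2) :
  (exists B, B \in M1) -> (exists B, B \in M2) -> exists B, B \in dsum M1 M2.
Proof. by move=> [B1 H1] [B2 H2]; exists (hs B1 B2); rewrite hs_in_dsum H1 H2. Qed.

Section FamS.
Variables (k n l m : nat).
Hypotheses (hl : l <= k) (hm : m <= n - k) (hk : k <= n).

Let hT : k - l <= n - l - m. Proof. lia. Qed.
Let neT := ne_Tmin hT.
Let ne2 := ne_dsum neT (ne_Unill l).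

Lemma matroid_Fam : is_matroid (Fam k n l m).
Proof.
apply: (matroid_dsum (ne_Uni0 m) ne2); first by rewrite Uni0; apply: matroid_set1.
apply: (matroid_dsum neT (ne_Unill l)); first exact: matroid_Tmin.
by rewrite Unill; apply: matroid_set1.
Qed.

Lemma mrk_Fam : mrk (Fam k n l m) = k.
Proof.
rewrite /Fam (mrk_dsum (ne_Uni0 m) ne2) (mrk_dsum neT (ne_Unill l)) mrk_Tmin //.
rewrite Uni0 Unill /mrk !mrank_set1 setI0 cards0 setIT cardsT card_ord; lia.
Qed.

Lemma card_Fam : #|[set: ('I_m + ('I_(n - l - m) + 'I_l))%type]| = n.
Proof. rewrite cardsT !card_sum !card_ord; lia. Qed.

Lemma tutte_Fam :
  tutte (Fam k n l m) = ('X_(1%R : 'I_2) ^+ m * (Qg 'X_(0%R : 'I_2) 'X_(1%R : 'I_2) (k - l) (n - k - m) * 'X_(0%R : 'I_2) ^+ l))%R.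
Proof.
rewrite /Fam (tutte_dsum (ne_Uni0 m) ne2) (tutte_dsum neT (ne_Unill l)).
rewrite tutte_Uni0 tutte_Unill.
have e : n - l - m = (k - l) + (n - k - m) by lia.
by rewrite e tutte_Tmin.
Qed.
End FamS.

Lemma Tmin0 N : Tmin 0 N = [set set0].
Proof. by apply/setP => X; rewrite in_Tmin in_set1 cards_eq0 andbT. Qed.

Lemma TminNN N : Tmin N N = [set setT].
Proof.
apply/setP => X; rewrite in_Tmin in_set1; apply/andP/eqP => [[/eqP c _]|->].
  by apply/eqP; rewrite eqEcard subsetT cardsT card_ord c leqnn.
by rewrite setTI card_L // cardsT card_ord eqxx leqnSn.
Qed.

Lemma Fam_deg k n l m : l <= k -> m <= n - k -> k <= n -> (l = k \/ m = n - k) ->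
  exists X, Fam k n l m = [set X] /\ #|X| = k.
Proof.
move=> hl hm hk [el|em]; rewrite /Fam Uni0 Unill.
  rewrite el subnn Tmin0 !dsum_set1; eexists; split; first reflexivity.
  by rewrite !card_hs !cards0 cardsT card_ord !add0n.
have e : n - l - m = k - l by lia.
rewrite e TminNN !dsum_set1; eexists; split; first reflexivity.
rewrite !card_hs cards0 !cardsT !card_ord; lia.
Qed.

Lemma miso_deg k n l m l' m' : l <= k -> m <= n - k -> k <= n -> (l = k \/ m = n - k) ->
  l' <= k -> m' <= n - k -> (l' = k \/ m' = n - k) ->
  miso (Fam k n l m) (Fam k n l' m').
Proof.
move=> hl hm hk d hl' hm' d'.
have [X [-> cX]] := Fam_deg hl hm hk d.
have [Y [-> cY]] := Fam_deg hl' hm' hk d'.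
apply: miso_set1; last by rewrite cX cY.
by have := card_Fam hl hm hk; have := card_Fam hl' hm' hk; rewrite !cardsT => -> ->.
Qed.

Section Sec8.
Local Open Scope ring_scope.


Definition M (i j : nat) : 'X_{1..2} := (U_(0%R : 'I_2) *+ i + U_(1%R : 'I_2) *+ j)%MM.
Definition X2 i j : {mpoly int[2]} := 'X_[M i j].

Lemma X2E i j : (xx ^+ i * yy ^+ j)%R = X2 i j.
Proof. by rewrite /X2 /M mpolyXD !mpolyXn. Qed.

Lemma M_eq i j a b : (M i j == M a b) = (i == a) && (j == b).
Proof.
apply/eqP/andP => [e|[/eqP -> /eqP ->]//].
have e0 := congr1 (fun m : 'X_{1..2} => m (0%R : 'I_2)) e.
have e1 := congr1 (fun m : 'X_{1..2} => m (1%R : 'I_2)) e.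
move: e0 e1; rewrite /M /= !mnmDE !mulmnE !mnm1E /= => e0 e1.
by split; apply/eqP; lia.
Qed.

Lemma cfX a b i j : mcoeff (M a b) (X2 i j) = ((i == a) && (j == b))%:R.
Proof. by rewrite mcoeffX M_eq. Qed.

Lemma Tp_expand (l m al be : nat) :
  (yy ^+ m * (Qg xx yy al be * xx ^+ l))%R =
  (X2 (l + al) m + X2 l (m + be) - X2 l m + \sum_(i < al) \sum_(j < be) X2 (l + i) (m + j))%R.
Proof.
have eS : (\sum_(i < al) \sum_(j < be) X2 (l + i) (m + j) =
   (xx ^+ l * \sum_(i < al) xx ^+ i) * (yy ^+ m * \sum_(j < be) yy ^+ j))%R.
  rewrite mulr_sumr mulr_suml; apply: eq_bigr => i _.
  rewrite [(yy ^+ m * _)%R]mulr_sumr mulr_sumr; apply: eq_bigr => j _.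
  by rewrite -X2E !exprD; ring.
rewrite eS -!X2E !exprD /Qg; ring.
Qed.

Lemma cnt (l a al : nat) : \sum_(i < al) ((l + i == a)%N%:R : int) = ((l <= a) && (a < l + al))%N%:R.
Proof.
elim: al => [|al IH]; first by rewrite big_ord0; lia.
by rewrite big_ord_recr /= IH; lia.
Qed.

Lemma cf_expand a b l m al be :
  mcoeff (M a b) (yy ^+ m * (Qg xx yy al be * xx ^+ l))%R =
  ((((l + al == a) && (m == b))%N%:R + ((l == a) && (m + be == b))%N%:R - ((l == a) && (m == b))%N%:R
    + (((l <= a) && (a < l + al)) && ((m <= b) && (b < m + be)))%N%:R) : int).
Proof.
rewrite Tp_expand mcoeffD mcoeffB mcoeffD !cfX; congr (_ + _)%R.
rewrite (big_morph _ (mcoeffD (M a b)) (mcoeff0 _ (M a b))).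
rewrite (eq_bigr (fun i : 'I_al => ((l + i == a)%N%:R * \sum_(j < be) ((m + j == b)%N%:R : int)))); last first.
  move=> i _; rewrite (big_morph _ (mcoeffD (M a b)) (mcoeff0 _ (M a b))) mulr_sumr.
  by apply: eq_bigr => j _; rewrite cfX -natrM mulnb.
by rewrite -mulr_suml !cnt -natrM mulnb.
Qed.

Definition Tp k n (p : nat * nat) : {mpoly int[2]} :=
  (yy ^+ p.2 * (Qg xx yy (k - p.1) (n - k - p.2) * xx ^+ p.1))%R.

Lemma A1 k n l m : (l <= k)%N -> (m <= n - k)%N -> (l = k \/ m = n - k)%N ->
  mcoeff (M k (n - k)) (Tp k n (l, m)) = 1.
Proof. by move=> hl hm hd; rewrite /Tp cf_expand /=; lia. Qed.

Lemma A2 k n l m l0 m0 : (l <= k)%N -> (m <= n - k)%N -> (l0 < k)%N -> (m0 < n - k)%N ->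
  ((l < k) && (m < n - k) -> (l0 < l) \/ (l0 = l /\ m0 <= m))%N ->
  mcoeff (M l0 m0.+1) (Tp k n (l, m)) = ((l == l0) && (m == m0))%N%:R.
Proof.
move=> hl hm h0 h1 hh; rewrite /Tp cf_expand /=.
case: (boolP ((l < k) && (m < n - k))%N) => hnd.
  have := hh hnd; move: hnd => /andP[hnd1 hnd2] hh'; lia.
move: hnd; rewrite negb_and -!leqNgt => hnd; lia.
Qed.

End Sec8.

Definition nondeg k n (p : nat * nat) : bool := (p.1 < k) && (p.2 < n - k).
Definition key k n (p : nat * nat) : option (nat * nat) := if nondeg k n p then Some p else None.

Lemma core k n (s : seq (nat * nat)) (c : nat -> int) :
  all (valid_par k n) s ->
  (forall i j, i < size s -> j < size s -> i != j ->
     key k n (nth (0, 0) s i) != key k n (nth (0, 0) s j)) ->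
  (\sum_(i < size s) c i *: Tp k n (nth (0, 0) s i) = 0)%R ->
  forall i, i < size s -> c i = 0%R.
Proof.
move=> hall hkey hsum.
move/(all_nthP (0, 0)): hall => hv.
have cf : forall mm, (\sum_(i < size s) c i * mcoeff mm (Tp k n (nth (0, 0) s i)) = 0)%R.
  move=> mm; have := congr1 (mcoeff mm) hsum.
  rewrite (mcoeff0 _ mm) (big_morph _ (mcoeffD mm) (mcoeff0 _ mm)).
  by under eq_bigr => i _ do rewrite mcoeffZ.
have H1 : forall i, i < size s -> nondeg k n (nth (0, 0) s i) -> c i = 0%R.
  move=> i hi hnd; apply/eqP/negPn/negP => cne.
  pose P := fun j : 'I_(size s) => nondeg k n (nth (0, 0) s j) && (c j != 0%R).
  have Pi : P (Ordinal hi) by rewrite /P hnd cne.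
  case: (arg_minnP (fun j : 'I_(size s) => (nth (0, 0) s j).1) Pi) => j1 Pj1 min1.
  pose P2 := fun j : 'I_(size s) => P j && ((nth (0, 0) s j).1 == (nth (0, 0) s j1).1).
  have P2j1 : P2 j1 by rewrite /P2 Pj1 eqxx.
  case: (arg_minnP (fun j : 'I_(size s) => (nth (0, 0) s j).2) P2j1) => j0 P2j0 min0.
  move: (P2j0); rewrite /P2 => /andP[Pj0 /eqP ej0].
  move: (Pj0); rewrite /P => /andP[nd0 cj0].
  set l0 := (nth (0, 0) s j1).1 in ej0 min0 P2j0 P2j1 *.
  set m0 := (nth (0, 0) s j0).2 in min0.
  have ej : nth (0, 0) s j0 = (l0, m0) by rewrite [LHS]surjective_pairing ej0.
  have v0 := hv j0 (ltn_ord j0); rewrite ej in v0 nd0.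
  move: v0 nd0; rewrite /valid_par /nondeg /= => /andP[vl0 vm0] /andP[nl0 nm0].
  have := cf (M l0 m0.+1).
  rewrite (bigD1 j0) //= big1 ?addr0.
    rewrite ej A2 //; last by move=> _; right.
    by rewrite !eqxx mulr1 => /eqP; rewrite (negbTE cj0).
  move=> j hj.
  case: (eqVneq (c j) 0%R) => [->|cj]; first by rewrite mul0r.
  have vj := hv j (ltn_ord j).
  have [vl vm] : ((nth (0, 0) s j).1 <= k) /\ ((nth (0, 0) s j).2 <= n - k).
    by move: vj; rewrite /valid_par => /andP[].
  have hyp : ((nth (0, 0) s j).1 < k) && ((nth (0, 0) s j).2 < n - k) ->
      (l0 < (nth (0, 0) s j).1) \/ (l0 = (nth (0, 0) s j).1 /\ m0 <= (nth (0, 0) s j).2).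
    move=> ndj.
    have Pj : P j by rewrite /P /nondeg ndj cj.
    have := min1 j Pj; rewrite -/l0 => hlj.
    case: (ltngtP l0 (nth (0, 0) s j).1) => hlj'; first by left.
      by move: hlj; rewrite leqNgt hlj'.
    right; split => //; apply: min0; rewrite /P2 Pj -/l0 -hlj' eqxx.
    done.
  rewrite [nth _ _ j]surjective_pairing (A2 vl vm nl0 nm0 hyp).
  suff -> : ((nth (0, 0) s j).1 == l0) && ((nth (0, 0) s j).2 == m0) = false by rewrite mulr0.
  apply/negP => /andP[/eqP e1 /eqP e2].
  have ejj : nth (0, 0) s j = nth (0, 0) s j0 by rewrite ej [LHS]surjective_pairing e1 e2.
  have hji : (j : nat) != j0 by apply: contraNneq hj => e; apply/eqP/val_inj.
  have := hkey j j0 (ltn_ord j) (ltn_ord j0) hji.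
  by rewrite ejj eqxx.
move=> i hi; case: (boolP (nondeg k n (nth (0, 0) s i))) => hnd; first exact: H1.
have := cf (M k (n - k)).
rewrite (bigD1 (Ordinal hi)) //= big1 ?addr0.
  have vi := hv i hi.
  move: vi hnd; case: (nth (0, 0) s i) => l m; rewrite /valid_par /nondeg /= => /andP[h1 h2] /nandP hd.
  rewrite A1 ?mulr1 //.
  by case: hd => h; [left|right]; move: h; rewrite -leqNgt => h; lia.
move=> j hj.
case: (boolP (nondeg k n (nth (0, 0) s j))) => hndj.
  by rewrite H1 ?mul0r.
have hji : (j : nat) != i by apply: contraNneq hj => e; apply/eqP/val_inj.
have := hkey j i (ltn_ord j) hi hji.
by rewrite /key (negbTE hnd) (negbTE hndj).
Qed.

Lemma sum_delta (N i : nat) (F : nat -> {mpoly int[2]}) : i < N ->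
  (\sum_(t < N) (((t : nat) == i)%:R : int) *: F t = F i)%R.
Proof.
move=> hi; rewrite (bigD1 (Ordinal hi)) //= eqxx scale1r big1 ?addr0 //.
move=> j hj; suff -> : (j == i :> nat) = false by rewrite scale0r.
by apply/negP => /eqP e; move: hj; rewrite (_ : j = Ordinal hi) ?eqxx //; apply: val_inj.
Qed.

Lemma tutte_Tp k n p : k <= n -> valid_par k n p -> tutte (Fam k n p.1 p.2) = Tp k n p.
Proof. by move=> hk /andP[hl hm]; rewrite tutte_Fam. Qed.

Lemma miso_key k n p q : k <= n -> valid_par k n p -> valid_par k n q -> key k n p = key k n q ->
  miso (Fam k n p.1 p.2) (Fam k n q.1 q.2).
Proof.
move=> hk /andP[hp1 hp2] /andP[hq1 hq2]; rewrite /key.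
case: ifP => hp; case: ifP => hq e; try discriminate e.
  by case: e => ->; apply: miso_refl.
move: hp hq; rewrite /nondeg => /negbT/nandP hp /negbT/nandP hq.
apply: miso_deg => //.
  by case: hp => h; [left|right]; move: h; rewrite -leqNgt => h; lia.
by case: hq => h; [left|right]; move: h; rewrite -leqNgt => h; lia.
Qed.

Definition s0 k n : seq (nat * nat) := (k, n - k) :: [seq (l, m) | l <- iota 0 k, m <- iota 0 (n - k)].

Lemma mem_s0 k n p : p \in [seq (l, m) | l <- iota 0 k, m <- iota 0 (n - k)] -> nondeg k n p.
Proof.
case/allpairsP => -[l m] /= [h1 h2 ->]; move: h1 h2; rewrite !mem_iota /nondeg /= !add0n.
by move=> -> ->.
Qed.

Lemma uniq_s0 k n : uniq [seq (l, m) | l <- iota 0 k, m <- iota 0 (n - k)].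
Proof. by apply: allpairs_uniq; rewrite ?iota_uniq // => -[a b] [c d] _ _ /= [-> ->]. Qed.

Lemma keys_s0 k n i j : i < size (s0 k n) -> j < size (s0 k n) -> i != j ->
  key k n (nth (0, 0) (s0 k n) i) != key k n (nth (0, 0) (s0 k n) j).
Proof.
have kd : key k n (k, n - k) = None by rewrite /key /nondeg /= ltnn.
have kA : forall t, t < size [seq (l, m) | l <- iota 0 k, m <- iota 0 (n - k)] ->
   key k n (nth (0, 0) [seq (l, m) | l <- iota 0 k, m <- iota 0 (n - k)] t) =
   Some (nth (0, 0) [seq (l, m) | l <- iota 0 k, m <- iota 0 (n - k)] t).
  by move=> t ht; rewrite /key mem_s0 // mem_nth.
case: i => [|i]; case: j => [|j] //= hi hj hij.
- by rewrite kd kA.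
- by rewrite kd kA.
rewrite !kA //; apply/negP => /eqP [] /eqP.
move: hi hj hij; rewrite !ltnS eqSS => hi hj hij; rewrite nth_uniq ?uniq_s0 //; by move/negbTE: hij => ->.
Qed.

Unset Implicit Arguments.
Theorem proposition4p12 (k n : nat) (hkn : k <= n) :
  (* every member of the family is a matroid of rank k on n elements *)
  (forall l m, valid_par k n (l, m) ->
     is_matroid (Fam k n l m) /\ mrk (Fam k n l m) = k /\
     #|[set: ('I_m + ('I_(n - l - m) + 'I_l))%type]| = n) /\
  (* exactly k(n-k)+1 isomorphism classes: a complete list of pairwise
     non-isomorphic representatives of that size *)
  (exists s : seq (nat * nat),
     [/\ size s = k * (n - k) + 1,
         all (valid_par k n) s,
         (forall i j, i < size s -> j < size s -> i != j ->
            ~ miso (Fam k n (nth (0, 0) s i).1 (nth (0, 0) s i).2)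
                   (Fam k n (nth (0, 0) s j).1 (nth (0, 0) s j).2)) &
         (forall l m, valid_par k n (l, m) ->
            exists2 i, i < size s &
              miso (Fam k n l m) (Fam k n (nth (0, 0) s i).1 (nth (0, 0) s i).2))]) /\
  (* Tutte polynomials of representatives of distinct classes are
     linearly independent in Z[x,y] *)
  (forall s : seq (nat * nat),
     all (valid_par k n) s ->
     (forall i j, i < size s -> j < size s -> i != j ->
        ~ miso (Fam k n (nth (0, 0) s i).1 (nth (0, 0) s i).2)
               (Fam k n (nth (0, 0) s j).1 (nth (0, 0) s j).2)) ->
     forall c : nat -> int,
       (\sum_(i < size s)
          c i *: tutte (Fam k n (nth (0%N, 0%N) s i).1 (nth (0%N, 0%N) s i).2) = 0)%R ->
       forall i, i < size s -> c i = 0%R).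
Proof.
have allv : all (valid_par k n) (s0 k n).
  apply/allP => p; rewrite inE => /orP[/eqP ->|/allpairsP[[l m] [/=]]].
    by rewrite /valid_par /= !leqnn.
  rewrite !mem_iota /valid_par !add0n => /andP[_ hl] /andP[_ hm] ->.
  by rewrite /= ltnW // ltnW.
move/(all_nthP (0, 0)): (allv) => hv0.
split.
  move=> l m /andP[hl hm]; split; first exact: (matroid_Fam hl hm hkn).
  by split; [exact: (mrk_Fam hl hm hkn) | exact: (card_Fam hl hm hkn)].
split.
  exists (s0 k n); split => //.
  - by rewrite /= size_allpairs !size_iota addn1.
  - move=> i j hi hj hij hiso.
    have ht := tutte_iso hiso.
    rewrite !tutte_Tp ?hv0 // in ht.
    pose c := fun t : nat => (((t == i)%:R : int) - (t == j)%:R)%R.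
    have hs : (\sum_(t < size (s0 k n)) c t *: Tp k n (nth (0, 0) (s0 k n) t) = 0)%R.
      rewrite (eq_bigr (fun t : 'I_(size (s0 k n)) => (((t : nat) == i)%:R : int) *: Tp k n (nth (0, 0) (s0 k n) t)
          - (((t : nat) == j)%:R : int) *: Tp k n (nth (0, 0) (s0 k n) t))%R); last first.
        by move=> t _; rewrite /c scalerBl.
      rewrite sumrB (sum_delta (fun t => Tp k n (nth (0, 0) (s0 k n) t)) hi).
      by rewrite (sum_delta (fun t => Tp k n (nth (0, 0) (s0 k n) t)) hj) ht subrr.
    have := core allv (@keys_s0 k n) hs hi.
    by rewrite /c eqxx (negbTE hij) subr0 => /eqP; rewrite oner_eq0.
  move=> l m hv.
  case: (boolP (nondeg k n (l, m))) => hnd.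
    have hin : (l, m) \in s0 k n.
      rewrite inE; apply/orP; right; apply: allpairs_f; rewrite mem_iota;
      by move: hnd; rewrite /nondeg => /andP[].
    exists (index (l, m) (s0 k n)); first by rewrite index_mem.
    by rewrite nth_index //; apply: miso_refl.
  exists 0 => //=.
  have := miso_key hkn hv (hv0 0 isT); apply.
  by rewrite /key (negbTE hnd) /nondeg /= ltnn.
move=> s hall hniso c hsum i hi.
move/(all_nthP (0, 0)): (hall) => hv.
refine (@core k n s c hall _ _ i hi).
  move=> a b ha hb hab; apply/negP => /eqP ek.
  by apply: (hniso a b ha hb hab); exact: (miso_key hkn (hv a ha) (hv b hb) ek).
rewrite -[RHS]hsum; apply: eq_bigr => t _.
by rewrite tutte_Tp ?hv.
Qed.
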